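(* Let $T$ be a Steiner-closed search tree of a tree $G$, and let $\Pi=p_0,p_1,\dots,p_j$ be the path in $T$ from the root $p_0$ to a node $p_j$. For any $i\in\{1,\dots,j\}$, let $\Pi'=\{p_i,\dots,p_j\}$. Then removing the vertices of $\mathrm{CH}(\Pi')$ from $\mathrm{CH}(\Pi)$ leaves a graph with at most $2$ connected components.
   Context: Search tree on a tree: a rooted tree $T$ is a valid search tree on an unrooted tree $G$ if the root $r$ of $T$ is a vertex of $G$ and the subtrees of $T\setminus r$ are valid search trees on the connected components of $G\setminus r$. For vertices $a,b$ of $G$, $P(a,b)$ is the vertex set of the path from $a$ to $b$ in $G$. Convex hull: for $S\subseteq V(G)$, $\mathrm{CH}(S)$ is the subgraph of $G$ induced by $\bigcup_{a,b\in S}P(a,b)$. A set $S$ is Steiner-closed (with respect to $G$) if every vertex of $\mathrm{CH}(S)\setminus S$ has degree exactly $2$ in $\mathrm{CH}(S)$. A search tree $T$ of $G$ is Steiner-closed if for every node $v$ of $T$, the set of nodes on the path in $T$ from the root to $v$ is a Steiner-closed set with respect to $G$. *)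

(* Defs.v *)
From HB Require Import structures.
From Stdlib Require Import List.
From mathcomp Require Import all_boot.
Set Implicit Arguments. Unset Strict Implicit. Unset Printing Implicit Defensive.

Section Defs.
Variables (V : finType) (e : rel V).

Definition gpath (a : V) (p : seq V) (b : V) : bool :=
  [&& path e a p, last a p == b & uniq (a :: p)].

Definition is_tree : Prop :=
  [/\ symmetric e, irreflexive e, (forall a b, connect e a b) &
      (forall a b p q, gpath a p b -> gpath a q b -> p = q)].

(* x lies on P(a,b), the vertex set of the path from a to b.
   (Simple paths have at most #|V| vertices, so the tuple bound is harmless.) *)
Definition onpath (a b x : V) : bool :=
  [exists n : 'I_#|V|.+1, exists p : n.-tuple V, gpath a p b && (x \in a :: p)].

Definition hull (S : {set V}) : {set V} :=
  [set x | [exists a in S, exists b in S, onpath a b x]].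

Definition restr (A : {set V}) : rel V :=
  [rel x y | [&& e x y, x \in A & y \in A]].

Definition components (A : {set V}) : {set {set V}} :=
  [set [set y in A | connect (restr A) x y] | x in A].

Definition steiner_closed (S : {set V}) : Prop :=
  forall v, v \in hull S :\: S -> #|[set u in hull S | e v u]| = 2.

End Defs.

Inductive rtree (V : Type) := Node : V -> seq (rtree V) -> rtree V.
Arguments Node {V}.

Fixpoint tset (V : finType) (t : rtree V) : {set V} :=
  match t with
  | Node r ts => r |: (fix go (l : seq (rtree V)) : {set V} :=
                         match l with [::] => set0 | t' :: l' => tset t' :|: go l' end) ts
  end.

(* valid_st e S t : t is a valid search tree on the subgraph of G induced on S
   (S assumed connected): the root r is in S and the subtrees are valid search
   trees on the connected components of G[S] \ r, one per component. *)
Inductive valid_st (V : finType) (e : rel V) : {set V} -> rtree V -> Prop :=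
| VST (S : {set V}) (r : V) (ts : seq (rtree V)) :
    r \in S ->
    perm_eq [seq tset t | t <- ts] (enum (components e (S :\ r))) ->
    (forall t, List.In t ts -> valid_st e (tset t) t) ->
    valid_st e S (Node r ts).

Definition search_tree (V : finType) (e : rel V) (T : rtree V) : Prop :=
  valid_st e [set: V] T.

Inductive tpath (V : Type) : rtree V -> seq V -> Prop :=
| TP0 r ts : tpath (Node r ts) [:: r]
| TPS r ts t p : List.In t ts -> tpath t p -> tpath (Node r ts) (r :: p).

Definition steiner_closed_tree (V : finType) (e : rel V) (T : rtree V) : Prop :=
  forall p, tpath T p -> steiner_closed e [set x in p].

(* Main.v *)
Require Import Defs.
From HB Require Import structures.
From mathcomp Require Import all_boot.
Set Implicit Arguments. Unset Strict Implicit. Unset Printing Implicit Defensive.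

Section Tree.
Variables (V : finType) (e : rel V).
Hypothesis Htree : is_tree e.

Lemma esymm : symmetric e. Proof. by case: Htree. Qed.

Lemma restr_sym (A : {set V}) : symmetric (restr e A).
Proof. by move=> x y; rewrite /restr /= esymm (andbC (x \in A)). Qed.

Lemma restr_csym (A : {set V}) x y : connect (restr e A) x y = connect (restr e A) y x.
Proof. exact: (sym_connect_sym (restr_sym A)). Qed.

Lemma restr_path (A : {set V}) a p : path e a p -> all [in A] (a :: p) -> path (restr e A) a p.
Proof.
elim: p a => //= b p IH a /andP[eab Hp] /andP[aA /andP[bA Hall]].
by rewrite /restr /= eab aA bA /= IH //= bA.
Qed.

Lemma restr_path_e (A : {set V}) a p : path (restr e A) a p -> path e a p.
Proof. by apply: sub_path => x y /andP[]. Qed.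

Lemma restr_mem (A : {set V}) a p : path (restr e A) a p -> {subset p <= A}.
Proof.
elim: p a => //= b p IH a /andP[/and3P[_ _ bA] Hp] z.
rewrite inE => /orP[/eqP -> //| ]; exact: IH Hp z.
Qed.

Lemma connect_mem (A : {set V}) a y : connect (restr e A) a y -> a != y -> y \in A.
Proof.
move/connectP => [p Hp ->] Hne.
have : last a p \in a :: p by apply: mem_last.
rewrite inE => /orP[/eqP Heq|]; first by rewrite Heq eqxx in Hne.
exact: restr_mem Hp _.
Qed.

Lemma restr_mono (A B : {set V}) : A \subset B ->
  forall x y, connect (restr e A) x y -> connect (restr e B) x y.
Proof.
move=> AB; apply: connect_sub => x y /and3P[exy xA yA].
by apply: connect1; rewrite /restr /= exy (subsetP AB _ xA) (subsetP AB _ yA).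
Qed.

Lemma gpath_ex a b : exists q, gpath e a q b.
Proof.
case: Htree => _ _ Hc _.
move/connectP: (Hc a b) => [p Hp ->].
case: (shortenP Hp) => p' Hp' Hu _.
by exists p'; rewrite /gpath Hp' eqxx Hu.
Qed.

Lemma gpath_uniq a p q b : gpath e a p b -> gpath e a q b -> p = q.
Proof. by case: Htree => _ _ _ H; apply: H. Qed.

Lemma onpathP a b x : reflect (exists2 q, gpath e a q b & x \in a :: q) (onpath e a b x).
Proof.
apply: (iffP existsP).
  by case=> n /existsP [p /andP [H1 H2]]; exists p.
case=> q Hq Hx.
have Hs : size q < #|V|.+1.
  case/and3P: Hq => _ _ /card_uniqP Hu.
  have := max_card (mem (a :: q)); rewrite Hu /= => H.
  by apply: leqW.
exists (Ordinal Hs); apply/existsP; exists (in_tuple q).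
by rewrite /= Hq Hx.
Qed.

Lemma onpath_gp a q b x : gpath e a q b -> onpath e a b x = (x \in a :: q).
Proof.
move=> Hq; apply/onpathP/idP; last by move=> Hx; exists q.
by case=> q' Hq' Hx; rewrite (gpath_uniq Hq Hq').
Qed.

Lemma onpath_l a b : onpath e a b a.
Proof. by case: (gpath_ex a b) => q Hq; rewrite (onpath_gp _ Hq) mem_head. Qed.

Lemma onpath_r a b : onpath e a b b.
Proof.
case: (gpath_ex a b) => q Hq; rewrite (onpath_gp _ Hq).
by case/and3P: Hq => _ /eqP <- _; apply: mem_last.
Qed.

Lemma onpath_xx x y : onpath e x x y -> y = x.
Proof.
case/onpathP => q /and3P[_ /eqP Hl Hu].
case: q Hl Hu => [|b q] /=; first by rewrite inE => _ _ /eqP.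
move=> Hl /andP[Hn _]; exfalso; move: Hn; rewrite -{1}Hl.
by have := mem_last b q; rewrite inE => ->.
Qed.

Lemma Lpath a b : connect (restr e [set y | onpath e a b y]) a b.
Proof.
case: (gpath_ex a b) => q Hq.
have Hq' := Hq; case/and3P: Hq' => Hp /eqP Hl _.
have Hp2 : path (restr e [set y | onpath e a b y]) a q.
  apply: restr_path Hp _; apply/allP => z Hz.
  by rewrite inE (onpath_gp _ Hq).
by apply: (path_connect Hp2); rewrite -Hl mem_last.
Qed.

Lemma L2 (A : {set V}) a b y : onpath e a b y -> connect (restr e A) a b -> connect (restr e A) a y.
Proof.
case/onpathP => q Hq Hy /connectP [p Hp Hb].
move: Hb; case: (shortenP Hp) => p' Hp' Hu Hsub Hb.
have Hg : gpath e a p' b by rewrite /gpath (restr_path_e Hp') Hb eqxx Hu.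
rewrite (gpath_uniq Hq Hg) in Hy.
exact: (path_connect Hp').
Qed.

Lemma onpathE a b x :
  onpath e a b x = (x == a) || ~~ connect (restr e [set~ x]) a b.
Proof.
apply/idP/idP.
  move=> H; case: eqP => //= Hxa; apply/negP => Hc.
  have := connect_mem (L2 H Hc); rewrite !inE eqxx /=.
  move=> H2; suff : false by []; apply: H2; apply/eqP => Hax; exact: Hxa (Logic.eq_sym Hax).
case/orP => [/eqP -> | Hn]; first exact: onpath_l.
case: (gpath_ex a b) => q Hq; rewrite (onpath_gp _ Hq).
apply/negPn/negP => Hx; move/negP: Hn; apply.
have Hq' := Hq; case/and3P: Hq' => Hp /eqP Hl _.
have Hp2 : path (restr e [set~ x]) a q.
  apply: restr_path Hp _; apply/allP => z Hz.
  by rewrite !inE; apply/eqP => Hzx; rewrite -Hzx Hz in Hx.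
by apply: (path_connect Hp2); rewrite -Hl mem_last.
Qed.

Lemma Lsuf x a y : onpath e x a y -> y != x -> connect (restr e [set~ x]) y a.
Proof.
case/onpathP => q /and3P[Hp /eqP Hl Hu] Hy Hyx.
case: q Hp Hl Hu Hy => [|b q] /=.
  by move=> _ _ _; rewrite inE (negbTE Hyx).
move=> /andP[_ Hp] Hl /andP[Hn Hu]; rewrite inE (negbTE Hyx) /= => Hy.
have Hp2 : path (restr e [set~ x]) b q.
  apply: restr_path Hp _; apply/allP => z Hz.
  by rewrite !inE; apply/eqP => Hzx; rewrite -Hzx Hz in Hn.
apply: (@connect_trans _ _ b).
  by rewrite restr_csym; apply: (path_connect Hp2).
by apply: (path_connect Hp2); rewrite -Hl mem_last.
Qed.

Lemma hull_convex (S : {set V}) x y z : y \in hull e S -> z \in hull e S ->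
  onpath e y z x -> x \in hull e S.
Proof.
rewrite !inE => /existsP[a1 /andP[a1S /existsP[b1 /andP[b1S H1]]]].
move=> /existsP[a2 /andP[a2S /existsP[b2 /andP[b2S H2]]]] Hx.
have Hw : forall a b, a \in S -> b \in S -> onpath e a b x ->
   [exists a in S, exists b in S, onpath e a b x].
  by move=> a b aS bS Ho; apply/existsP; exists a; rewrite aS; apply/existsP; exists b; rewrite bS.
case E1: (onpath e a1 b1 x); first exact: Hw E1.
case E2: (onpath e a2 b2 x); first exact: Hw E2.
case E3: (onpath e a1 a2 x); first exact: Hw E3.
move: E1 E2 E3; rewrite !onpathE => /norP[_ /negbNE C1] /norP[_ /negbNE C2] /norP[_ /negbNE C3].
have D1 := L2 H1 C1; have D2 := L2 H2 C2.
move: Hx; rewrite onpathE => /orP[/eqP Hxy|/negP []].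
  by rewrite Hxy; apply/existsP; exists a1; rewrite a1S; apply/existsP; exists b1; rewrite b1S.
apply: (@connect_trans _ _ a1); first by rewrite restr_csym.
by apply: (@connect_trans _ _ a2).
Qed.

Lemma conn_convex (C : {set V}) a b y :
  (forall x z, x \in C -> z \in C -> connect (restr e C) x z) ->
  a \in C -> b \in C -> onpath e a b y -> y \in C.
Proof.
move=> Hc aC bC Hy; have := L2 Hy (Hc _ _ aC bC).
case: (eqVneq a y) => [<- //|Hne] H; exact: connect_mem H Hne.
Qed.


Lemma first_hit (W : pred V) a p : path e a p -> a \notin W -> last a p \in W ->
  exists m' m, [/\ e m' m, m' \notin W, m \in W, m' \in a :: p & m \in p].
Proof.
elim: p a => [|b p IH] a /=; first by move=> _ /negbTE ->.
move=> /andP[eab Hp] aW Hl.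
case bW: (b \in W).
  by exists a, b; rewrite eab aW bW !inE !eqxx ?orbT.
have [m' [m [H1 H2 H3 H4 H5]]] := IH b Hp (negbT bW) Hl.
exists m', m; split => //; rewrite inE ?H4 ?H5 ?orbT //.
Qed.

Lemma exit_lem (X C : {set V}) a p : path e a p -> a \notin C -> last a p \in C ->
  all [in X] (a :: p) ->
  exists u v, [/\ u \notin C, v \in C, e u v & connect (restr e (X :\: C)) a u].
Proof.
elim: p a => [|b p IH] a /=; first by move=> _ /negbTE ->.
move=> /andP[eab Hp] aC Hl /andP[aX Hall].
case bC: (b \in C).
  by exists a, b; split => //; apply: connect0.
have [u [v [H1 H2 H3 H4]]] := IH b Hp (negbT bC) Hl Hall.
exists u, v; split => //; apply: connect_trans H4; apply: connect1.
move: (Hall) => /andP[bX _].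
by rewrite /restr /= eab !inE aX bX aC bC.
Qed.

Lemma notin_all (C : {set V}) s u : all [in C] s -> u \notin C -> u \notin s.
Proof.
move=> /allP Ha uC; apply/negP => Hs; have := Ha _ Hs; by rewrite (negbTE uC).
Qed.

Lemma spath (C : {set V}) x z : connect (restr e C) x z -> x \in C ->
  exists q, [/\ path e x q, uniq (x :: q), last x q = z & all [in C] (x :: q)].
Proof.
move/connectP => [p Hp ->] xC.
case: (shortenP Hp) => p' Hp' Hu _.
exists p'; split => //; first exact: restr_path_e Hp'.
apply/allP => y; rewrite inE => /orP[/eqP -> //|]; exact: restr_mem Hp' y.
Qed.

Lemma three_attach (P C : {set V}) u1 u2 u3 v1 v2 v3 :
  steiner_closed e P ->
  (forall x z, x \in C -> z \in C -> connect (restr e C) x z) ->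
  (forall x, x \in C -> x \notin P) ->
  u1 \in P -> u2 \in P -> u3 \in P -> u1 != u2 -> u2 != u3 -> u3 != u1 ->
  v1 \in C -> v2 \in C -> v3 \in C -> e u1 v1 -> e u2 v2 -> e u3 v3 -> False.
Proof.
move=> HsP Hc HCP u1P u2P u3P n12 n23 n31 v1C v2C v3C e1 e2 e3.
have uC : forall u, u \in P -> u \notin C.
  by move=> u uP; apply/negP => /HCP; rewrite uP.
have [q12 [Hp12 Hu12 Hl12 Ha12]] := spath (Hc _ _ v1C v2C) v1C.
have Hun : uniq (u1 :: rcons (v1 :: q12) u2).
  rewrite cons_uniq mem_rcons rcons_uniq in_cons negb_or n12.
  by rewrite (notin_all Ha12 (uC _ u1P)) (notin_all Ha12 (uC _ u2P)) Hu12.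
have Hg : gpath e u1 (rcons (v1 :: q12) u2) u2.
  by rewrite /gpath rcons_path last_rcons eqxx Hun /= e1 Hp12 Hl12 esymm e2.
have HW : forall z, z \in u1 :: rcons (v1 :: q12) u2 -> z \in hull e P.
  move=> z Hz; rewrite inE; apply/existsP; exists u1; rewrite u1P; apply/existsP.
  by exists u2; rewrite u2P (onpath_gp _ Hg).
have [c3 [Hp3 Hu3 Hl3 Ha3]] := spath (Hc _ _ v3C v1C) v3C.
have Hg3 : gpath e u3 (v3 :: c3) v1.
  by rewrite /gpath /= e3 Hp3 Hl3 eqxx -/(uniq (v3 :: c3)) Hu3 (notin_all Ha3 (uC _ u3P)).
have u3W : u3 \notin u1 :: rcons (v1 :: q12) u2.
  have H1 := notin_all Ha12 (uC _ u3P).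
  rewrite in_cons mem_rcons negb_or n31 /=.
  by rewrite in_cons negb_or (eq_sym u3 u2) n23.
have Hp3' : path e u3 (v3 :: c3) by case/and3P: Hg3.
have Hl3' : last u3 (v3 :: c3) \in u1 :: rcons (v1 :: q12) u2.
  by rewrite [last _ _]/= Hl3 in_cons mem_rcons !in_cons eqxx !orbT.
have [m' [m [Hem Hm'W HmW Hm' Hm]]] :=
  @first_hit [in u1 :: rcons (v1 :: q12) u2] u3 (v3 :: c3) Hp3' u3W Hl3'.
have mC : m \in C by move/allP: Ha3; apply.
have u3h : u3 \in hull e P.
  by rewrite inE; apply/existsP; exists u3; rewrite u3P; apply/existsP; exists u3; rewrite u3P onpath_l.
have v1h : v1 \in hull e P by apply: HW; rewrite in_cons mem_rcons !in_cons eqxx !orbT.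
have m'h : m' \in hull e P.
  by apply: (hull_convex u3h v1h); rewrite (onpath_gp _ Hg3).
have mS : m \in rcons (v1 :: q12) u2.
  move: HmW; rewrite in_cons => /orP[/eqP Hmu1|//].
  by move: mC; rewrite Hmu1 (negbTE (uC _ u1P)).
move: Hg HW Hm'W Hun; case: (splitPr mS) => p1 p2 Hg HW Hm'W Hun.
case: p2 Hg HW Hm'W Hun => [|b p2] Hg HW Hm'W Hun.
  move: Hg => /and3P[_ /eqP Hl _]; rewrite last_cat /= in Hl.
  by move: mC; rewrite Hl (negbTE (uC _ u2P)).
have Hd : uniq ((u1 :: p1) ++ (m :: b :: p2)) by exact: Hun.
move: (Hg) => /and3P[Hpp _ _]; rewrite cat_path in Hpp; case/andP: Hpp => _ /= /and3P[Hpm0 Hmb0 _].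
rewrite cat_uniq in Hd; case/and3P: Hd => _ Hd' _.
have predW : last u1 p1 \in u1 :: p1 ++ m :: b :: p2.
  by rewrite -cat_cons mem_cat mem_last.
have bW : b \in u1 :: p1 ++ m :: b :: p2.
  by rewrite -cat_cons mem_cat !in_cons eqxx !orbT.
have mW : m \in u1 :: p1 ++ m :: b :: p2.
  by rewrite -cat_cons mem_cat !in_cons eqxx !orbT.
have Hcard : #|[set u in hull e P | e m u]| = 2.
  by apply: HsP; rewrite in_setD (HCP _ mC) (HW _ mW).
have Hgt : 2 < #|[set u in hull e P | e m u]|.
  apply/card_gt2P; exists m', (last u1 p1), b; split; first split.
  - by rewrite inE m'h esymm.
  - by rewrite inE (HW _ predW) esymm Hpm0.
  - by rewrite inE (HW _ bW) Hmb0.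
  split.
  - by apply/eqP => Heq; move: Hm'W; rewrite Heq predW.
  - apply/eqP => Heq; move/hasPn: Hd' => /(_ b); rewrite -Heq mem_last => H.
    by move: H; rewrite !in_cons eqxx orbT => /(_ isT).
  - by apply/eqP => Heq; move: Hm'W; rewrite -Heq bW.
by rewrite Hcard in Hgt.
Qed.

Lemma comp_props (A K : {set V}) : K \in components e A ->
  [/\ K \subset A, (forall x y, x \in K -> y \in K -> connect (restr e K) x y)
    & (forall x y, x \in K -> e x y -> y \in A -> y \in K)].
Proof.
case/imsetP => x0 x0A ->.
have Hcl : forall y, connect (restr e A) x0 y ->
    connect (restr e [set y in A | connect (restr e A) x0 y]) x0 y.
  move=> y /connectP [p Hp ->].
  have Hp2 : path (restr e [set y in A | connect (restr e A) x0 y]) x0 p.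
    apply: restr_path (restr_path_e Hp) _; apply/allP => z Hz; rewrite inE.
    rewrite (path_connect Hp Hz) andbT.
    move: Hz; rewrite in_cons => /orP[/eqP -> //|]; exact: restr_mem Hp z.
  by apply: (path_connect Hp2); apply: mem_last.
split.
- by apply/subsetP => y; rewrite inE => /andP[].
- move=> y z; rewrite !inE => /andP[yA Hy] /andP[zA Hz].
  apply: (@connect_trans _ _ x0); first by rewrite restr_csym; apply: Hcl.
  exact: Hcl.
- move=> y z; rewrite !inE => /andP[yA Hy] eyz zA; rewrite zA /=.
  apply: connect_trans Hy _; apply: connect1; by rewrite /restr /= eyz yA zA.
Qed.

Lemma In_tset (ts : seq (rtree V)) t : List.In t ts -> tset t \in [seq tset t | t <- ts].
Proof.
elim: ts => //= t' ts IH [->|H]; first by rewrite in_cons eqxx.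
by rewrite in_cons IH ?orbT.
Qed.

Lemma child_comp (S : {set V}) r ts t :
  perm_eq [seq tset t | t <- ts] (enum (components e (S :\ r))) -> List.In t ts ->
  tset t \in components e (S :\ r).
Proof. by move=> Hp Hin; rewrite -mem_enum -(perm_mem Hp); exact: In_tset. Qed.

Lemma valid_inv S r ts : valid_st e S (Node r ts) ->
  [/\ r \in S, perm_eq [seq tset t | t <- ts] (enum (components e (S :\ r)))
    & forall t, List.In t ts -> valid_st e (tset t) t].
Proof. by move=> H; inversion H; subst; split. Qed.

Lemma tpath_sub t0 p0 : tpath t0 p0 -> forall S, valid_st e S t0 -> {subset p0 <= S}.
Proof.
elim => [r ts | r ts t p Hin Ht IH] S /valid_inv [rS Hperm Hch].
  by move=> x; rewrite inE => /eqP ->.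
move=> x; rewrite in_cons => /orP[/eqP -> //|Hx].
case: (comp_props (child_comp Hperm Hin)) => Hsub _ _.
have := IH _ (Hch _ Hin) _ Hx.
by move=> /(subsetP Hsub); rewrite in_setD1 => /andP[].
Qed.

Lemma Cexists t0 p0 : tpath t0 p0 -> forall S i, valid_st e S t0 -> 0 < i < size p0 ->
  exists C : {set V}, [/\ {subset drop i p0 <= C}, {in C, forall x, x \notin take i p0},
    C \subset S, (forall x y, x \in C -> y \in C -> connect (restr e C) x y)
    & (forall x y, x \in C -> e x y -> y \in S -> y \notin take i p0 -> y \in C)].
Proof.
elim => [r ts | r ts t p Hin Ht IH] S i Hv /andP[Hi0 Hi].
  by case: i Hi0 Hi => [|[|i]].
move/valid_inv: Hv => [rS Hperm Hch].
case: (comp_props (child_comp Hperm Hin)) => Hsub Hconn Hclos.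
have HKS : tset t \subset S.
  by apply/subsetP => x /(subsetP Hsub); rewrite in_setD1 => /andP[].
case: i Hi0 Hi => [|[|i]] // _ Hi.
  exists (tset t); split => //.
  - by rewrite /= drop0; apply: (tpath_sub Ht (Hch _ Hin)).
  - by move=> x /(subsetP Hsub); rewrite in_setD1 /= inE take0 orbF => /andP[].
  - move=> x y xK exy yS; rewrite /= inE take0 orbF => yr.
    by apply: (Hclos x) => //; rewrite in_setD1 yr.
have [C [H1 H2 H3 H4 H5]] := IH _ i.+1 (Hch _ Hin) (Hi : 0 < i.+1 < size p).
exists C; split => //.
- move=> x xC; rewrite /= in_cons negb_or H2 // andbT.
  have := subsetP H3 _ xC; move=> /(subsetP Hsub); rewrite in_setD1 => /andP[] //.
- by apply: (subset_trans H3).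
- move=> x y xC exy yS; rewrite /= in_cons negb_or => /andP[yr yt].
  apply: (H5 x) => //; apply: (Hclos x) => //; first exact: (subsetP H3).
  by rewrite in_setD1 yr.
Qed.

Lemma tpath_take (t0 : rtree V) (p0 : seq V) : tpath t0 p0 -> forall i, 0 < i -> tpath t0 (take i p0).
Proof.
elim => [r ts | r ts t p Hin Ht IH] [|i] // _.
  by rewrite /=; apply: TP0.
case: i => [|i]; first by rewrite /= take0; apply: TP0.
by rewrite /=; econstructor; [exact: Hin | exact: IH].
Qed.

End Tree.

Lemma card_imset_le (T : finType) (A : {set T}) (f : T -> T) (g : T -> {set T}) :
  {in A &, forall x y, f x = f y -> g x = g y} -> #|g @: A| <= #|f @: A|.
Proof.
move=> Hg.
pose h b := g (odflt b [pick x in A | f x == b]).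
have -> : g @: A = h @: (f @: A).
  rewrite -imset_comp; apply: eq_in_imset => x xA /=; rewrite /h.
  case: pickP => [x' /andP[x'A /eqP Hf] | Hn] /=; first exact: Hg.
  by have := Hn x; rewrite xA eqxx.
exact: leq_imset_card.
Qed.

Lemma main_count (V : finType) (e : rel V) (Ps Qs C : {set V}) :
  is_tree e -> steiner_closed e Ps ->
  (forall x z, x \in C -> z \in C -> connect (restr e C) x z) ->
  (forall x, x \in C -> x \notin Ps) ->
  (forall x y, x \in C -> e x y -> y \notin Ps -> y \in C) ->
  Qs \subset C -> (exists c, c \in Qs) ->
  #|components e (hull e (Ps :|: Qs) :\: hull e Qs)| <= 2.
Proof.
move=> Ht HsP Hc HCP Hclos HQC [c cQ].
have cC : c \in C := subsetP HQC _ cQ.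
have cS : c \in Ps :|: Qs by rewrite in_setU cQ orbT.
have HH'C : hull e Qs \subset C.
  apply/subsetP => y; rewrite inE => /existsP[a /andP[aQ /existsP[b /andP[bQ Hy]]]].
  exact: (conn_convex Ht Hc (subsetP HQC _ aQ) (subsetP HQC _ bQ) Hy).
have HNb : #|[set u in Ps | [exists v in C, e u v]]| <= 2.
  rewrite leqNgt; apply/negP => /card_gt2P [u1 [u2 [u3 [[H1 H2 H3] [n12 n23 n31]]]]].
  move: H1; rewrite inE => /andP[u1P /existsP[v1 /andP[v1C e1]]].
  move: H2; rewrite inE => /andP[u2P /existsP[v2 /andP[v2C e2]]].
  move: H3; rewrite inE => /andP[u3P /existsP[v3 /andP[v3C e3]]].
  exact: (three_attach Ht HsP Hc HCP u1P u2P u3P n12 n23 n31 v1C v2C v3C e1 e2 e3).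
have Hii : forall x, x \in hull e (Ps :|: Qs) :\: hull e Qs ->
    exists2 u, u \in [set u in Ps | [exists v in C, e u v]] &
      connect (restr e (hull e (Ps :|: Qs) :\: hull e Qs)) x u.
  move=> x; rewrite in_setD => /andP[xnH' xH].
  move: (xH); rewrite inE => /existsP[a /andP[aS /existsP[b /andP[bS Hab]]]].
  have Hw : exists2 w, w \in Ps :|: Qs & forall y, onpath e x w y -> y \notin hull e Qs.
    case E: [exists y, onpath e x a y && (y \in hull e Qs)]; last first.
      exists a => // y Hy; apply/negP => Hy'; move/negbT/existsPn: E => /(_ y).
      by rewrite Hy Hy'.
    case E2: [exists z, onpath e x b z && (z \in hull e Qs)]; last first.
      exists b => // y Hy; apply/negP => Hy'; move/negbT/existsPn: E2 => /(_ y).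
      by rewrite Hy Hy'.
    move/existsP: E => [y /andP[Hy yH]]; move/existsP: E2 => [z /andP[Hz zH]].
    have yx : y != x by apply/eqP => Hyx; move: yH; rewrite Hyx (negbTE xnH').
    have zx : z != x by apply/eqP => Hzx; move: zH; rewrite Hzx (negbTE xnH').
    exfalso; move/negP: xnH'; apply; apply: (hull_convex Ht yH zH).
    rewrite (onpathE Ht); apply/orP; right; apply/negP => Hyz.
    have C1 := Lsuf Ht Hy yx; have C2 := Lsuf Ht Hz zx.
    move: Hab; rewrite (onpathE Ht) => /orP[/eqP Hxa|/negP []].
      by move: Hy; rewrite -Hxa => /onpath_xx Hyx; rewrite Hyx eqxx in yx.
    apply: (@connect_trans _ _ y); first by rewrite (restr_csym Ht).
    by apply: (@connect_trans _ _ z) => //; rewrite (restr_csym Ht).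
  case: Hw => w wS Hw.
  have wH : w \in hull e (Ps :|: Qs).
    by rewrite inE; apply/existsP; exists w; rewrite wS; apply/existsP; exists w; rewrite wS (onpath_l Ht).
  have wnH' : w \notin hull e Qs := Hw w (onpath_r Ht x w).
  have wP : w \in Ps.
    move: wS; rewrite in_setU => /orP[//|wQ]; move: wnH'.
    by rewrite inE; move/existsPn => /(_ w); rewrite wQ /=; move/existsPn => /(_ w); rewrite wQ (onpath_l Ht).
  have wC : w \notin C by apply/negP => /HCP; rewrite wP.
  have Hxw : connect (restr e (hull e (Ps :|: Qs) :\: hull e Qs)) x w.
    apply: (restr_mono _ (Lpath Ht x w)); apply/subsetP => y; rewrite inE => Hy.
    by rewrite in_setD (Hw _ Hy) /= (hull_convex Ht xH wH Hy).
  case: (gpath_ex Ht w c) => q Hq; have Hq' := Hq; case/and3P: Hq' => Hp /eqP Hl _.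
  have Hall : all [in [set y | onpath e w c y]] (w :: q).
    by apply/allP => y Hy; rewrite inE (onpath_gp Ht _ Hq) Hy.
  have [u [v [uC vC euv Hwu]]] := exit_lem Hp wC (etrans (congr1 _ Hl) cC) Hall.
  have uP : u \in Ps.
    by apply/negPn/negP => uP; move: uC; rewrite (Hclos v u vC (etrans (esymm Ht v u) euv) uP).
  exists u.
    by rewrite inE uP; apply/existsP; exists v; rewrite vC euv.
  apply: connect_trans Hxw _; apply: (restr_mono _ Hwu).
  apply/subsetP => y; rewrite in_setD => /andP[ynC Hy]; rewrite in_setD; apply/andP; split.
    by apply/negP => /(subsetP HH'C); rewrite (negbTE ynC).
  rewrite inE in Hy; rewrite inE; apply/existsP; exists w; rewrite wS; apply/existsP.
  by exists c; rewrite cS Hy.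
pose f := fun x => odflt x [pick u in [set u in Ps | [exists v in C, e u v]] |
   connect (restr e (hull e (Ps :|: Qs) :\: hull e Qs)) x u].
have Hf : forall x, x \in hull e (Ps :|: Qs) :\: hull e Qs ->
    f x \in [set u in Ps | [exists v in C, e u v]] /\
    connect (restr e (hull e (Ps :|: Qs) :\: hull e Qs)) x (f x).
  move=> x xA; rewrite /f; case: pickP => [u /andP[uN Hu] | Hn] /=; first by [].
  by case: (Hii x xA) => u uN Hu; have := Hn u; rewrite uN Hu.
rewrite /components.
apply: leq_trans (card_imset_le (f := f) _) _.
- move=> x y xA yA Hfxy.
  case: (Hf x xA) => _ Hx; case: (Hf y yA) => _ Hy.
  rewrite Hfxy in Hx.
  have Hxy : connect (restr e (hull e (Ps :|: Qs) :\: hull e Qs)) x y.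
    by apply: connect_trans Hx _; rewrite (restr_csym Ht).
  apply: eq_finset => z /=; congr andb.
  apply/idP/idP => H; last exact: connect_trans Hxy H.
  by apply: connect_trans _ H; rewrite (restr_csym Ht).
- apply: leq_trans _ HNb; apply: subset_leq_card; apply/subsetP => u /imsetP[x xA ->].
  by case: (Hf x xA).
Qed.

Theorem mainTheorem5 (V : finType) (e : rel V) (T : rtree V) (Pi : seq V) (i : nat) :
  is_tree e ->
  search_tree e T ->
  steiner_closed_tree e T ->
  tpath T Pi ->
  0 < i < size Pi ->
  #|components e (hull e [set x in Pi] :\: hull e [set x in drop i Pi])| <= 2.
Proof.
move=> Ht HT Hsc HPi Hi.
have [C [HQC HCP _ Hconn Hclos]] := Cexists Ht HPi HT Hi.
have i0 : 0 < i by case/andP: Hi.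
have HsP : steiner_closed e [set x in take i Pi] := Hsc _ (tpath_take HPi i0).
have -> : [set x in Pi] = [set x in take i Pi] :|: [set x in drop i Pi].
  by apply/setP => x; rewrite !inE -mem_cat cat_take_drop.
apply: (main_count Ht HsP Hconn).
- by move=> x xC; rewrite inE HCP.
- by move=> x y xC exy; rewrite inE => yn; apply: (Hclos x y xC exy (in_setT y) yn).
- by apply/subsetP => x; rewrite inE => /HQC.
- have : 0 < size (drop i Pi) by rewrite size_drop subn_gt0; case/andP: Hi.
  by case: (drop i Pi) => [|c s] // _; exists c; rewrite inE mem_head.
Qed.
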